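(* Let $K$ be a field and $\nu$ a valuation on $K[x]$. Let $\mathbf{Q}\subseteq K[x]$ be a complete set for $\nu$. Then for every polynomial $p\in K[x]$ there exist $a_1,\ldots,a_r\in K$ and $\lambda_1,\ldots,\lambda_r\in\mathbb{N}^{\mathbf{Q}}$ such that \[ p=\sum_{i=1}^r a_i\mathbf{Q}^{\lambda_i}\quad\text{and}\quad \nu\left(a_i\mathbf{Q}^{\lambda_i}\right)\geq \nu(p)\ \text{ for every } i,\ 1\leq i\leq r, \] and every $Q\in\mathbf{Q}$ appearing in this decomposition (i.e. with $\lambda_i(Q)\neq 0$ for some $i$) satisfies $\deg(Q)\leq\deg(p)$. In particular, for every $\beta\in\nu(K[x])$, the additive group $P_\beta=\{y\in K[x]\mid \nu(y)\geq\beta\}$ is generated by the elements $a\mathbf{Q}^\lambda$ lying in $P_\beta$, where $a\in K$ and $\lambda\in\mathbb{N}^{\mathbf{Q}}$.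
   Context: A valuation on a commutative ring $R$ is a map $\nu:R\to\Gamma\cup\{\infty\}$, $\Gamma$ an ordered abelian group, with $\nu(ab)=\nu(a)+\nu(b)$, $\nu(a+b)\geq\min\{\nu(a),\nu(b)\}$, $\nu(1)=0$, $\nu(0)=\infty$ (nonzero elements may have value $\infty$). For a nonconstant monic $q\in K[x]$ and $f\in K[x]$, the $q$-expansion of $f$ is the unique expression $f=f_0+f_1q+\cdots+f_nq^n$ with each $f_i=0$ or $\deg(f_i)<\deg(q)$; the $q$-truncation of $\nu$ is $\nu_q(f):=\min_{0\leq i\leq n}\nu(f_iq^i)$. A set $\mathbf{Q}$ of nonconstant monic polynomials in $K[x]$ is a complete set for $\nu$ if for every nonconstant $p\in K[x]$ there exists $q\in\mathbf{Q}$ with $\deg(q)\leq\deg(p)$ and $\nu(p)=\nu_q(p)$. $\mathbb{N}^{\mathbf{Q}}$ denotes the set of maps $\lambda:\mathbf{Q}\to\mathbb{N}$ with $\lambda(q)=0$ for all but finitely many $q$, and $\mathbf{Q}^\lambda:=\prod_{q\in\mathbf{Q}}q^{\lambda(q)}$. *)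

(* Defs.v *)
From HB Require Import structures.
From mathcomp Require Import all_boot all_order all_algebra.
Set Implicit Arguments. Unset Strict Implicit. Unset Printing Implicit Defensive.
Import GRing.Theory.
Local Open Scope ring_scope.

Definition is_oag (G : zmodType) (le : rel G) : Prop :=
  [/\ reflexive le, antisymmetric le, transitive le, total le
    & forall x y z, le x y -> le (x + z) (y + z)].

(* Values in G ∪ {∞}: [None] is ∞. *)
Section Values.
Variables (G : zmodType) (le : rel G).

Definition vle (x y : option G) : bool :=
  match x, y with
  | _, None => true
  | None, Some _ => false
  | Some a, Some b => le a b
  end.

Definition vadd (x y : option G) : option G :=
  match x, y with
  | Some a, Some b => Some (a + b)
  | _, _ => None
  end.

Definition vmin (x y : option G) : option G := if vle x y then x else y.
End Values.

Definition is_valuation (R : comNzRingType) (G : zmodType) (le : rel G)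
    (nu : R -> option G) : Prop :=
  [/\ forall a b, nu (a * b) = vadd (nu a) (nu b),
      forall a b, vle le (vmin le (nu a) (nu b)) (nu (a + b)),
      nu 1 = Some 0
    & nu 0 = None].

Section Poly.
Variable K : fieldType.

Fixpoint qexp_coefs (q f : {poly K}) (n : nat) : seq {poly K} :=
  match n with
  | 0%N => [::]
  | n'.+1 => (f %% q) :: qexp_coefs q (f %/ q) n'
  end.

(* The q-expansion f = \sum_i f_i q^i; size f many coefficients suffice
   (trailing ones being zero). *)
Definition qexpansion (q f : {poly K}) : seq {poly K} :=
  qexp_coefs q f (size f).

(* q-truncation nu_q(f) = min_i nu(f_i q^i); for f = 0 this is nu(0). *)
Definition qtrunc (G : zmodType) (le : rel G) (nu : {poly K} -> option G)
    (q f : {poly K}) : option G :=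
  foldr (vmin le) (nu 0)
    [seq nu ((qexpansion q f)`_i * q ^+ i) | i <- iota 0 (size (qexpansion q f))].

(* Q is a complete set for nu. Q is a set of nonconstant monic polynomials;
   deg q <= deg p is expressed as size q <= size p. *)
Definition complete_set (G : zmodType) (le : rel G) (nu : {poly K} -> option G)
    (Q : {poly K} -> Prop) : Prop :=
  (forall q, Q q -> q \is monic /\ (1 < size q)%N) /\
  (forall p : {poly K}, (1 < size p)%N ->
     exists q, [/\ Q q, (size q <= size p)%N & nu p = qtrunc le nu q p]).

(* Elements of N^Q: maps lambda : Q -> N with finite support; the support is
   recorded in a finite list and all support points lie in Q. *)
Record NQ (Q : {poly K} -> Prop) := MkNQ {
  nq_fun : {poly K} -> nat;
  nq_supp : seq {poly K};
  nq_suppP : forall q, nq_fun q <> 0%N -> q \in nq_supp /\ Q q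
}.

Definition Qpow (Q : {poly K} -> Prop) (lam : NQ Q) : {poly K} :=
  \prod_(q <- undup (nq_supp lam)) q ^+ nq_fun lam q.
End Poly.

(* Main.v *)
Require Import Defs.
From HB Require Import structures.
From mathcomp Require Import all_boot all_order all_algebra.
From mathcomp Require Import zify.
Import GRing.Theory.
Local Open Scope ring_scope.

Section Aux.
Variables (K : fieldType) (G : zmodType) (le : rel G).
Hypothesis oag : is_oag le.

Lemma vle_refl x : vle le x x.
Proof. case: oag => r _ _ _ _; case: x => //= a; exact: r. Qed.

Lemma vle_trans x y z : vle le x y -> vle le y z -> vle le x z.
Proof.
case: oag => _ _ t _ _; case: x => [a|]; case: y => [b|]; case: z => [c|] //= h1 h2.
exact: t h1 h2.
Qed.

Lemma vle_total x y : vle le x y || vle le y x.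
Proof. case: oag => _ _ _ t _; case: x; case: y => //= *; exact: t. Qed.

Lemma vmin_l x y : vle le (vmin le x y) x.
Proof.
rewrite /vmin; case: ifP => h; first exact: vle_refl.
by have := vle_total x y; rewrite h.
Qed.

Lemma vmin_r x y : vle le (vmin le x y) y.
Proof. rewrite /vmin; case: ifP => h //; exact: vle_refl. Qed.

Lemma vmin_ge b x y : vle le b x -> vle le b y -> vle le b (vmin le x y).
Proof. by rewrite /vmin; case: ifP. Qed.

Lemma vadd_mono x y z : vle le x y -> vle le (vadd x z) (vadd y z).
Proof.
case: oag => _ _ _ _ c; case: z => [c'|]; last by case: x; case: y.
case: x; case: y => //= *; exact: c.
Qed.

Lemma foldr_vmin_le x0 (s : seq (option G)) y :
  y \in s -> vle le (foldr (vmin le) x0 s) y.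
Proof.
elim: s => //= a s IH; rewrite in_cons => /orP [/eqP -> | h].
  exact: vmin_l.
apply: vle_trans (vmin_r _ _) (IH h).
Qed.

Variable nu : {poly K} -> option G.
Hypothesis val : is_valuation le nu.

Lemma nuN1 : nu (-1) = Some 0.
Proof.
case: val => m _ n1 _.
have := m (-1) (-1); rewrite mulrNN mulr1 n1.
case e: (nu (-1)) => [g|] //= [gg].
case: oag => _ anti _ tot c.
apply: f_equal; apply: anti.
case/orP: (tot g 0) => h; apply/andP; split => //.
- by have := c g 0 g h; rewrite -gg add0r.
- by have := c 0 g g h; rewrite -gg add0r.
Qed.

Lemma nuN y : nu (- y) = nu y.
Proof.
case: val => m _ _ _.
rewrite -mulrN1 m nuN1; case: (nu y) => //= g; by rewrite addr0.
Qed.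

Lemma nu_add_ge b x y : vle le b (nu x) -> vle le b (nu y) -> vle le b (nu (x + y)).
Proof.
case: val => _ a _ _ hx hy.
apply: vle_trans (a x y); exact: vmin_ge.
Qed.

Lemma nu_sum_ge b n (F : 'I_n -> {poly K}) :
  (forall i, vle le b (nu (F i))) -> vle le b (nu (\sum_(i < n) F i)).
Proof.
move=> h; apply: (big_ind (fun x => vle le b (nu x))).
- by case: val => _ _ _ ->; case: (b).
- exact: nu_add_ge.
- by move=> i _; apply: h.
Qed.

Lemma nu_muln_ge b x n : vle le b (nu x) -> vle le b (nu (x *+ n)).
Proof.
move=> h; elim: n => [|n IH].
  by rewrite mulr0n; case: val => _ _ _ ->; case: (b).
rewrite mulrS; exact: nu_add_ge.
Qed.

Lemma nu_mulz_ge b x k : vle le b (nu x) -> vle le b (nu (x *~ k)).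
Proof.
move=> h; case: k => n /=.
  exact: nu_muln_ge.
rewrite NegzE mulrNz nuN; exact: nu_muln_ge.
Qed.

End Aux.

Section Expan.
Variable K : fieldType.

Lemma size_qexp (q f : {poly K}) n : size (qexp_coefs q f n) = n.
Proof. by elim: n f => //= n IH f; rewrite IH. Qed.

Lemma qexp_sum (q : {poly K}) : (1 < size q)%N ->
  forall n (f : {poly K}), (size f <= n)%N ->
  f = \sum_(i < n) (qexp_coefs q f n)`_i * q ^+ i.
Proof.
move=> hq; elim=> [|n IH] f hf.
  by rewrite big_ord0; apply/eqP; rewrite -size_poly_eq0 -leqn0.
rewrite big_ord_recl /= expr0 mulr1.
have q0 : q != 0 by rewrite -size_poly_gt0; lia.
have hs : (size (f %/ q)%R <= n)%N.
  rewrite size_divp //; move: hq hf; case: (size q) => // m /= h1 h2; rewrite leq_subLR; apply: (leq_trans h2); rewrite -addn1 addnC leq_add2r; by case: m h1.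
under eq_bigr => i _ do rewrite /bump leq0n add0n add1n exprSr mulrA.
rewrite -mulr_suml -(IH _ hs) addrC; exact: divp_eq.
Qed.
End Expan.

Section NQs.
Variables (K : fieldType) (Q : {poly K} -> Prop).

Definition nq0 : NQ Q := @MkNQ K Q (fun _ => 0%N) [::] (fun q h => ltac:(by case: h)).

Lemma nq_add_proof (lam : NQ Q) (q : {poly K}) (Qq : Q q) (i : nat) :
  forall x, (nq_fun lam x + (if x == q then i else 0))%N <> 0%N ->
    x \in q :: nq_supp lam /\ Q x.
Proof.
move=> x; case: (eqVneq x q) => [->|nxq] h.
  by rewrite mem_head.
rewrite addn0 in h; have [h1 h2] := nq_suppP h.
by rewrite in_cons h1 orbT.
Qed.

Definition nq_add lam q Qq i : NQ Q :=
  MkNQ (@nq_add_proof lam q Qq i).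

Lemma prod_supp (lam : NQ Q) (s t : seq {poly K}) :
  uniq s -> uniq t ->
  (forall x, nq_fun lam x != 0%N -> x \in s) ->
  (forall x, nq_fun lam x != 0%N -> x \in t) ->
  \prod_(x <- s) x ^+ nq_fun lam x = \prod_(x <- t) x ^+ nq_fun lam x.
Proof.
move=> us ut hs ht.
have E r : \prod_(x <- r) x ^+ nq_fun lam x =
   \prod_(x <- [seq y <- r | nq_fun lam y != 0%N]) x ^+ nq_fun lam x.
  rewrite big_filter [RHS]big_mkcond /=; apply: eq_bigr => x _.
  by case: ifP => // /negbFE /eqP ->.
rewrite E [RHS]E; apply: perm_big; apply: uniq_perm; try exact: filter_uniq.
move=> x; rewrite !mem_filter.
case h: (nq_fun lam x != 0%N) => //=.
by rewrite (hs _ h) (ht _ h).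
Qed.

Lemma Qpow_eq (lam : NQ Q) (s : seq {poly K}) :
  uniq s -> (forall x, nq_fun lam x != 0%N -> x \in s) ->
  Qpow lam = \prod_(x <- s) x ^+ nq_fun lam x.
Proof.
move=> us hs; rewrite /Qpow; apply: prod_supp => //; first exact: undup_uniq.
move=> x /eqP h; rewrite mem_undup; exact: (nq_suppP h).1.
Qed.

Lemma Qpow0 : Qpow nq0 = 1.
Proof. by rewrite /Qpow /= big_nil. Qed.

Lemma Qpow_add lam q Qq i : Qpow (@nq_add lam q Qq i) = Qpow lam * q ^+ i.
Proof.
rewrite /Qpow /=.
set s := undup (q :: nq_supp lam).
have us : uniq s by exact: undup_uniq.
have qs : q \in s by rewrite mem_undup mem_head.
have sub : forall x, x \in nq_supp lam -> x \in s.
  by move=> x hx; rewrite mem_undup in_cons hx orbT.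
under eq_bigr => x _ do rewrite exprD.
rewrite big_split /=; congr (_ * _).
  symmetry; apply: prod_supp; [exact: undup_uniq | exact: us | | ].
    move=> x /eqP h; rewrite mem_undup; exact: (nq_suppP h).1.
  move=> x /eqP h; exact: (sub _ (nq_suppP h).1).
rewrite (bigD1_seq q) //= eqxx big1 ?mulr1 // => x /negbTE ->; exact: expr0.
Qed.
End NQs.

Section Dec.
Variables (K : fieldType) (G : zmodType) (le : rel G).
Variables (nu : {poly K} -> option G) (Q : {poly K} -> Prop).
Hypothesis oag : is_oag le.
Hypothesis val : is_valuation le nu.

Definition good v m (x : K * NQ Q) :=
  vle le v (nu (x.1 *: Qpow x.2)) /\
  forall q', nq_fun x.2 q' <> 0%N -> (size q' <= m)%N.

Fixpoint allg v m (s : seq (K * NQ Q)) : Prop :=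
  match s with [::] => True | x :: s' => good v m x /\ allg v m s' end.

Definition Dec v m (p : {poly K}) := exists s : seq (K * NQ Q),
  p = \sum_(x <- s) x.1 *: Qpow x.2 /\ allg v m s.

Lemma allg_cat v m s t : allg v m s -> allg v m t -> allg v m (s ++ t).
Proof. by elim: s => //= x s IH [h1 h2] ht; split => //; apply: IH. Qed.

Lemma allg_nth v m s d i : allg v m s -> (i < size s)%N -> good v m (nth d s i).
Proof.
elim: s i => //= x s IH [|i] [h1 h2] hi //; exact: IH.
Qed.

Lemma Dec0 v m : Dec v m 0.
Proof. by exists [::]; rewrite big_nil. Qed.

Lemma Dec_add v m p p' : Dec v m p -> Dec v m p' -> Dec v m (p + p').
Proof.
move=> [s [-> hs]] [t [-> ht]]; exists (s ++ t); split; last exact: allg_cat.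
by rewrite big_cat.
Qed.

Lemma Dec_sum v m n (F : 'I_n -> {poly K}) :
  (forall i, Dec v m (F i)) -> Dec v m (\sum_(i < n) F i).
Proof.
move=> h; apply: (big_ind (Dec v m)); [exact: Dec0 | exact: Dec_add | by move=> i _].
Qed.

Lemma Dec_weak v v' m m' p : vle le v' v -> (m <= m')%N -> Dec v m p -> Dec v' m' p.
Proof.
move=> hv hm [s [-> hs]]; exists s; split => //.
elim: s hs => //= x s IH [[g1 g2] hs]; split; last exact: IH.
split; first exact: (@vle_trans _ _ oag _ _ _ hv g1).
move=> q' /g2 h; exact: leq_trans h hm.
Qed.

Lemma Dec_const m c : Dec (nu c%:P) m c%:P.
Proof.
exists [:: (c, @nq0 K Q)]; rewrite big_cons big_nil addr0 /= Qpow0 -alg_polyC.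
split => //; split => //; split => //; rewrite /= Qpow0; exact: (@vle_refl _ _ oag).
Qed.

Lemma Dec_mul v m q (Qq : Q q) i f : (size q <= m)%N -> Dec v m f ->
  Dec (vadd v (nu (q ^+ i))) m (f * q ^+ i).
Proof.
move=> hq [s [-> hs]].
exists [seq (x.1, @nq_add K Q x.2 q Qq i) | x <- s]; split.
  rewrite big_map mulr_suml; apply: eq_bigr => x _ /=.
  by rewrite Qpow_add scalerAl.
elim: s hs => //= x s IH [[g1 g2] hs]; split; last exact: IH.
split.
  rewrite /= Qpow_add scalerAl; case: val => mu _ _ _; rewrite mu.
  exact: vadd_mono.
move=> q' /=; case: (eqVneq q' q) => [-> _ //|_].
by rewrite addn0 => /g2.
Qed.

End Dec.

Lemma size_qexp_nth (K : fieldType) (q : {poly K}) : q != 0 ->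
  forall n f i, (size (nth 0%R (qexp_coefs q f n) i) < size q)%N.
Proof.
move=> q0; elim=> [|n IH] f i /=.
  by rewrite nth_nil size_poly0 size_poly_gt0.
case: i => [|i] /=; [by rewrite ltn_modp | exact: IH].
Qed.

Lemma Dec_main (K : fieldType) (G : zmodType) (le : rel G)
    (nu : {poly K} -> option G) (Q : {poly K} -> Prop) :
  is_oag le -> is_valuation le nu -> complete_set le nu Q ->
  forall p, @Dec K G le nu Q (nu p) (size p) p.
Proof.
move=> oag val cs.
suff H : forall n (p : {poly K}), (size p <= n)%N -> @Dec K G le nu Q (nu p) (size p) p.
  by move=> p; exact: H _ p (leqnn _).
elim=> [|n IH] p hp; case: (leqP (size p) 1) => h1.
- have E := size1_polyC h1; move: (p`_0) E => c ->; exact: Dec_const.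
- by move: hp h1; case: (size p).
- have E := size1_polyC h1; move: (p`_0) E => c ->; exact: Dec_const.
case: cs => hQ hc; have [q [Qq hqp hnu]] := hc p h1.
have [mq sq] := hQ q Qq.
have q0 : q != 0 by exact: monic_neq0.
rewrite [X in Dec _ _ _ _ _ _ _ X](@qexp_sum K q sq (size p) p (leqnn (size p))).
apply: Dec_sum => i.
set c := (qexp_coefs q p (size p))`_i.
have hcs : (size c < size q)%N by exact: (@size_qexp_nth K q q0).
have hc1 : @Dec K G le nu Q (nu c) (size p) c.
  have hcp : (size c < size p)%N := leq_trans hcs hqp.
  apply: (@Dec_weak _ _ _ _ _ oag (nu c) (nu c) (size c) (size p)).
  - exact: (@vle_refl _ _ oag).
  - exact: ltnW.
  - apply: IH; exact: leq_trans hcp hp.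
have hc2 := @Dec_mul _ _ _ _ _ oag val _ _ _ Qq i _ hqp hc1.
apply: (@Dec_weak _ _ _ _ _ oag _ _ (size p)) hc2 => //.
case: val => mu _ _ _; rewrite -mu hnu /qtrunc.
apply: (@foldr_vmin_le _ _ oag).
have -> : c * q ^+ i = (qexpansion q p)`_i * q ^+ i by [].
apply/mapP; exists (nat_of_ord i) => //.
by rewrite mem_iota add0n /qexpansion size_qexp ltn_ord.
Qed.

Lemma Dec_ord (K : fieldType) (G : zmodType) (le : rel G)
    (nu : {poly K} -> option G) (Q : {poly K} -> Prop) v m p :
  @Dec K G le nu Q v m p ->
  exists (r : nat) (a : 'I_r -> K) (lam : 'I_r -> NQ Q),
    [/\ p = \sum_(i < r) a i *: Qpow (lam i),
        forall i, vle le v (nu (a i *: Qpow (lam i)))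
      & forall i q, nq_fun (lam i) q <> 0%N -> (size q <= m)%N].
Proof.
move=> [s [E hs]]; set d := (0 : K, @nq0 K Q).
exists (size s), (fun i => (nth d s i).1), (fun i => (nth d s i).2); split.
- by rewrite E (big_nth d) big_mkord.
- by move=> i; have [] := @allg_nth K G le nu Q _ _ _ d _ hs (ltn_ord i).
- by move=> i; have [] := @allg_nth K G le nu Q _ _ _ d _ hs (ltn_ord i).
Qed.

Theorem mainTheorem1 (K : fieldType) (G : zmodType) (le : rel G)
    (nu : {poly K} -> option G) (Q : {poly K} -> Prop) :
  is_oag le -> is_valuation le nu -> complete_set le nu Q ->
  (forall p : {poly K},
     exists (r : nat) (a : 'I_r -> K) (lam : 'I_r -> NQ Q),
       [/\ p = \sum_(i < r) a i *: Qpow (lam i),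
           forall i, vle le (nu p) (nu (a i *: Qpow (lam i)))
         & forall i q, nq_fun (lam i) q <> 0%N -> (size q <= size p)%N])
  /\
  (forall beta : option G, (exists f, nu f = beta) ->
     forall y : {poly K},
       vle le beta (nu y) <->
       exists (r : nat) (k : 'I_r -> int) (a : 'I_r -> K) (lam : 'I_r -> NQ Q),
         (forall i, vle le beta (nu (a i *: Qpow (lam i)))) /\
         y = \sum_(i < r) (a i *: Qpow (lam i)) *~ k i).
Proof.
move=> oag val cs; split.
  move=> p; apply: Dec_ord; exact: Dec_main.
move=> beta _ y; split.
  move=> hb; have [r [a [lam [E hv _]]]] := @Dec_ord K G le nu Q _ _ _ (@Dec_main K G le nu Q oag val cs y).
  exists r, (fun _ => 1), a, lam; split.
    move=> i; exact: (@vle_trans _ _ oag _ _ _ hb (hv i)).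
  by rewrite E; apply: eq_bigr => i _; rewrite mulr1z.
move=> [r [k [a [lam [h ->]]]]].
apply: (@nu_sum_ge K G le oag nu val) => i; apply: (@nu_mulz_ge K G le oag nu val); exact: h.
Qed.
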